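(* Let $\alpha: I\to M$ be a unit-speed curve on an oriented surface $M\subset E^3$ with Darboux frame $\{T,V,U\}$ and geodesic torsion $\tau_g$. Let $\phi$ be an antiderivative of $\tau_g$ on $I$ and let $$\gamma(s)=\alpha(s)+\sin(\phi(s))\,V(s)+\cos(\phi(s))\,U(s),$$ and assume $\gamma$ is regular, i.e. $\gamma'(s)\neq 0$ for all $s$. Then $\gamma$ is a general helix if and only if $\alpha$ is a helical curve on $M$.
   Context: $M$ is an oriented surface in Euclidean 3-space $E^3$ and $\alpha:I\to M$ is a unit-speed curve with arc-length parameter $s$. Its Darboux frame $\{T,V,U\}$ consists of the unit tangent $T=\alpha'$, the unit surface normal $U$ of $M$ along $\alpha$, and $V=U\times T$; it satisfies $T'=k_gV+k_nU$, $V'=-k_gT+\tau_gU$, $U'=-k_nT-\tau_gV$, where $k_g,k_n,\tau_g$ are the geodesic curvature, normal curvature and geodesic torsion. A regular curve is a general helix if its unit tangent makes a constant angle with a fixed direction. $\alpha$ is a helical curve on $M$ if $\langle T,d\rangle$ is constant for some fixed unit vector $d$. *)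

(* Defs.v *)
From Stdlib Require Import Reals.
From Coquelicot Require Import Coquelicot.
Open Scope R_scope.

Record vec3 := mkv { vx : R; vy : R; vz : R }.

Definition vadd (u v : vec3) : vec3 := mkv (vx u + vx v) (vy u + vy v) (vz u + vz v).
Definition vscal (a : R) (v : vec3) : vec3 := mkv (a * vx v) (a * vy v) (a * vz v).
Definition vzero : vec3 := mkv 0 0 0.
Definition vdot (u v : vec3) : R := vx u * vx v + vy u * vy v + vz u * vz v.
Definition vnorm (v : vec3) : R := sqrt (vdot v v).
Definition vcross (u v : vec3) : vec3 :=
  mkv (vy u * vz v - vz u * vy v)
      (vz u * vx v - vx u * vz v)
      (vx u * vy v - vy u * vx v).

Definition is_vderive (f : R -> vec3) (s : R) (v : vec3) : Prop :=
  is_derive (fun t => vx (f t)) s (vx v) /\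
  is_derive (fun t => vy (f t)) s (vy v) /\
  is_derive (fun t => vz (f t)) s (vz v).

(* The derivative of f at s (meaningful when f is differentiable at s). *)
Definition vderiv (f : R -> vec3) (s : R) : vec3 :=
  mkv (Derive (fun t => vx (f t)) s) (Derive (fun t => vy (f t)) s)
      (Derive (fun t => vz (f t)) s).

Definition in_interval (a b : Rbar) (s : R) : Prop := Rbar_lt a s /\ Rbar_lt s b.

Definition regular_on (a b : Rbar) (g : R -> vec3) : Prop :=
  forall s, in_interval a b s -> exists v, is_vderive g s v /\ v <> vzero.

Definition unit_tangent (g : R -> vec3) (s : R) : vec3 :=
  vscal (/ vnorm (vderiv g s)) (vderiv g s).

Definition general_helix (a b : Rbar) (g : R -> vec3) : Prop :=
  exists d : vec3, vnorm d = 1 /\ exists c : R,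
    forall s, in_interval a b s -> vdot (unit_tangent g s) d = c.

Definition helical_curve (a b : Rbar) (T : R -> vec3) : Prop :=
  exists d : vec3, vnorm d = 1 /\ exists c : R,
    forall s, in_interval a b s -> vdot (T s) d = c.

Definition darboux_frame (a b : Rbar) (alpha T V U : R -> vec3)
    (kg kn taug : R -> R) : Prop :=
  forall s, in_interval a b s ->
    is_vderive alpha s (T s) /\
    vnorm (T s) = 1 /\ vnorm (U s) = 1 /\ vdot (T s) (U s) = 0 /\
    V s = vcross (U s) (T s) /\
    is_vderive T s (vadd (vscal (kg s) (V s)) (vscal (kn s) (U s))) /\
    is_vderive V s (vadd (vscal (- kg s) (T s)) (vscal (taug s) (U s))) /\
    is_vderive U s (vadd (vscal (- kn s) (T s)) (vscal (- taug s) (V s))).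

(* Main.v *)
Require Import Defs.
From Stdlib Require Import Reals Lra Classical.
From Coquelicot Require Import Coquelicot.
Open Scope R_scope.

Lemma is_derive_eq (f : R -> R) s l l' : is_derive f s l -> l = l' -> is_derive f s l'.
Proof. intros H ->; exact H. Qed.

Lemma comp_deriv (A Vf Uf phi : R -> R) s a' v' u' p :
  is_derive A s a' -> is_derive Vf s v' -> is_derive Uf s u' -> is_derive phi s p ->
  is_derive (fun t => A t + (sin (phi t) * Vf t + cos (phi t) * Uf t)) s
    (a' + (cos (phi s) * p * Vf s + sin (phi s) * v' + (- sin (phi s) * p * Uf s + cos (phi s) * u'))).
Proof.
  intros HA HV HU HP.
  apply (is_derive_plus A (fun t => sin (phi t) * Vf t + cos (phi t) * Uf t)); auto.
  apply (is_derive_plus (fun t => sin (phi t) * Vf t) (fun t => cos (phi t) * Uf t)).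
  - eapply is_derive_eq.
    + apply (is_derive_mult (fun t => sin (phi t)) Vf s _ _
        (is_derive_comp sin phi s _ _ (is_derive_sin _) HP) HV).
      intros; apply Rmult_comm.
    + simpl. unfold plus, mult, scal; simpl. unfold mult; simpl. ring.
  - eapply is_derive_eq.
    + apply (is_derive_mult (fun t => cos (phi t)) Uf s _ _
        (is_derive_comp cos phi s _ _ (is_derive_cos _) HP) HU).
      intros; apply Rmult_comm.
    + simpl. unfold plus, mult, scal; simpl. unfold mult; simpl. ring.
Qed.

Section S.
Variables (a b : Rbar) (alpha T V U : R -> vec3) (kg kn taug phi : R -> R).
Hypothesis HD : darboux_frame a b alpha T V U kg kn taug.
Hypothesis HP : forall s, in_interval a b s -> is_derive phi s (taug s).
Let gam := fun s => vadd (alpha s)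
                     (vadd (vscal (sin (phi s)) (V s)) (vscal (cos (phi s)) (U s))).
Let f := fun s => 1 - kg s * sin (phi s) - kn s * cos (phi s).

Lemma gam_deriv s : in_interval a b s -> is_vderive gam s (vscal (f s) (T s)).
Proof.
  intros Hs. destruct (HD s Hs) as (Ha & _ & _ & _ & _ & HT & HV & HU).
  specialize (HP s Hs).
  destruct Ha as (Ax & Ay & Az). destruct HV as (Vx & Vy & Vz). destruct HU as (Ux & Uy & Uz).
  unfold gam, f; simpl in *.
  split; [|split]; (eapply is_derive_eq; [apply comp_deriv; eassumption|]); simpl; ring.
Qed.

Lemma vderiv_gam s : in_interval a b s -> vderiv gam s = vscal (f s) (T s).
Proof.
  intros Hs. destruct (gam_deriv s Hs) as (H1 & H2 & H3).
  unfold vderiv, vscal; f_equal; apply is_derive_unique; assumption.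
Qed.

Lemma f_nz s : regular_on a b gam -> in_interval a b s -> f s <> 0.
Proof.
  intros Hr Hs Hf. destruct (Hr s Hs) as (v & Hv & Hnz).
  destruct Hv as (H1 & H2 & H3). destruct (gam_deriv s Hs) as (G1 & G2 & G3).
  apply Hnz. destruct v as [x y z]; simpl in *.
  rewrite <- (is_derive_unique _ _ _ H1), <- (is_derive_unique _ _ _ H2),
    <- (is_derive_unique _ _ _ H3), (is_derive_unique _ _ _ G1),
    (is_derive_unique _ _ _ G2), (is_derive_unique _ _ _ G3), Hf.
  unfold vzero; f_equal; ring.
Qed.

Lemma ut_gam s : in_interval a b s -> f s <> 0 -> forall d,
  vdot (unit_tangent gam s) d = (f s / Rabs (f s)) * vdot (T s) d.
Proof.
  intros Hs Hf d. unfold unit_tangent. rewrite vderiv_gam by auto.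
  destruct (HD s Hs) as (_ & HTn & _).
  assert (E : vnorm (vscal (f s) (T s)) = Rabs (f s)).
  { unfold vnorm in *. replace (vdot (vscal (f s) (T s)) (vscal (f s) (T s)))
      with (Rsqr (f s) * vdot (T s) (T s)) by (unfold vdot, Rsqr; simpl; ring).
    rewrite sqrt_mult_alt by apply Rle_0_sqr. rewrite HTn, sqrt_Rsqr_abs; ring. }
  rewrite E. unfold vdot; simpl. unfold Rdiv; ring.
Qed.

Hypothesis HC : forall s, in_interval a b s -> continuous kg s /\ continuous kn s /\ continuous taug s.

Lemma f_cont s : in_interval a b s -> continuity_pt f s.
Proof.
  intros Hs. destruct (HC s Hs) as (Hk & Hn & _).
  apply continuity_pt_filterlim in Hk. apply continuity_pt_filterlim in Hn.
  assert (Hp : continuity_pt phi s).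
  { apply continuity_pt_filterlim. apply (ex_derive_continuous (K:=R_AbsRing) (V:=R_NormedModule)). eexists; apply HP; auto. }
  unfold f. apply continuity_pt_minus. apply continuity_pt_minus.
  apply continuity_pt_const. intros x y; reflexivity.
  apply continuity_pt_mult; auto. apply (continuity_pt_comp phi sin); auto. apply continuity_sin.
  apply continuity_pt_mult; auto. apply (continuity_pt_comp phi cos); auto. apply continuity_cos.
Qed.

End S.

Lemma interval_between a b s1 s2 x : in_interval a b s1 -> in_interval a b s2 ->
  s1 <= x <= s2 -> in_interval a b x.
Proof.
  intros [H1 _] [_ H2] [Hx1 Hx2]. split.
  - eapply Rbar_lt_le_trans; [exact H1|]. simpl; exact Hx1.
  - eapply Rbar_le_lt_trans; [|exact H2]. simpl; exact Hx2.
Qed.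

Lemma no_sign_change a b (g : R -> R) :
  (forall s, in_interval a b s -> continuity_pt g s) ->
  (forall s, in_interval a b s -> g s <> 0) ->
  forall s1 s2, in_interval a b s1 -> in_interval a b s2 -> s1 < s2 ->
  g s1 < 0 -> 0 < g s2 -> False.
Proof.
  intros Hc Hn s1 s2 H1 H2 Hlt Hg1 Hg2.
  assert (Hc2 : forall x, s1 <= x <= s2 -> continuity_pt g x).
  { intros x Hx. apply Hc. exact (interval_between a b s1 s2 x H1 H2 Hx). }
  destruct (Ranalysis5.IVT_interv g s1 s2 Hc2 Hlt Hg1 Hg2) as (z & Hz & Hgz).
  exact (Hn z (interval_between a b s1 s2 z H1 H2 Hz) Hgz).
Qed.

Lemma same_sign a b (g : R -> R) :
  (forall s, in_interval a b s -> continuity_pt g s) ->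
  (forall s, in_interval a b s -> g s <> 0) ->
  forall s1 s2, in_interval a b s1 -> in_interval a b s2 -> 0 < g s1 * g s2.
Proof.
  intros Hc Hn.
  assert (Hc' : forall s, in_interval a b s -> continuity_pt (fun t => - g t) s).
  { intros s Hs. apply continuity_pt_opp. auto. }
  assert (Hn' : forall s, in_interval a b s -> - g s <> 0).
  { intros s Hs H. apply (Hn s Hs). lra. }
  intros s1 s2 H1 H2.
  pose proof (Hn s1 H1). pose proof (Hn s2 H2).
  destruct (Rtotal_order s1 s2) as [Hlt|[Heq|Hgt]].
  - destruct (Rtotal_order (g s1) 0) as [A|[A|A]]; [|contradiction|];
    destruct (Rtotal_order (g s2) 0) as [B|[B|B]]; try contradiction; try nra.
    + exfalso; apply (no_sign_change a b g Hc Hn s1 s2); auto.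
    + exfalso; apply (no_sign_change a b (fun t => - g t) Hc' Hn' s1 s2); auto; lra.
  - subst. destruct (Rtotal_order (g s2) 0) as [A|[A|A]]; [nra|contradiction|nra].
  - destruct (Rtotal_order (g s1) 0) as [A|[A|A]]; [|contradiction|];
    destruct (Rtotal_order (g s2) 0) as [B|[B|B]]; try contradiction; try nra.
    + exfalso; apply (no_sign_change a b (fun t => - g t) Hc' Hn' s2 s1); auto; lra.
    + exfalso; apply (no_sign_change a b g Hc Hn s2 s1); auto.
Qed.

Lemma sgn_eq x y : 0 < x * y -> x / Rabs x = y / Rabs y.
Proof.
  intros H. destruct (Rtotal_order x 0) as [A|[A|A]].
  - assert (y < 0) by nra. rewrite !Rabs_left by lra. field; lra.
  - subst; nra.
  - assert (0 < y) by nra. rewrite !Rabs_right by lra. field; lra.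
Qed.

Lemma sgn_sq x : x <> 0 -> (x / Rabs x) * (x / Rabs x) = 1.
Proof.
  intros H. destruct (Rtotal_order x 0) as [A|[A|A]].
  - rewrite Rabs_left by lra. field; lra.
  - contradiction.
  - rewrite Rabs_right by lra. field; lra.
Qed.

Theorem theorem3p3 (a b : Rbar) (alpha T V U : R -> vec3) (kg kn taug phi : R -> R) :
  darboux_frame a b alpha T V U kg kn taug ->
  (forall s, in_interval a b s -> continuous kg s /\ continuous kn s /\ continuous taug s) ->
  (forall s, in_interval a b s -> is_derive phi s (taug s)) ->
  regular_on a b (fun s => vadd (alpha s)
                     (vadd (vscal (sin (phi s)) (V s)) (vscal (cos (phi s)) (U s)))) ->
  (general_helix a b (fun s => vadd (alpha s)
                     (vadd (vscal (sin (phi s)) (V s)) (vscal (cos (phi s)) (U s))))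
   <-> helical_curve a b T).
Proof.
  intros HD HC HP Hr.
  set (f := fun s => 1 - kg s * sin (phi s) - kn s * cos (phi s)).
  assert (Hnz : forall s, in_interval a b s -> f s <> 0)
    by (intros; eapply f_nz; eauto).
  assert (Hcf : forall s, in_interval a b s -> continuity_pt f s)
    by (intros; eapply f_cont; eauto).
  assert (Hut : forall s, in_interval a b s -> forall d,
    vdot (unit_tangent (fun s => vadd (alpha s)
       (vadd (vscal (sin (phi s)) (V s)) (vscal (cos (phi s)) (U s)))) s) d
    = (f s / Rabs (f s)) * vdot (T s) d)
    by (intros s Hs; apply (ut_gam a b alpha T V U kg kn taug phi HD HP s Hs (Hnz s Hs))).
  assert (Hss : forall s1 s2, in_interval a b s1 -> in_interval a b s2 ->
    f s1 / Rabs (f s1) = f s2 / Rabs (f s2)).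
  { intros; apply sgn_eq. eapply same_sign; eauto. }
  split.
  - intros (d & Hd & c & Hc). exists d; split; auto.
    destruct (classic (exists s0, in_interval a b s0)) as [[s0 Hs0]|Hno].
    + exists ((f s0 / Rabs (f s0)) * c). intros s Hs.
      rewrite <- (Hc s Hs), Hut by auto. rewrite (Hss s0 s) by auto.
      rewrite <- Rmult_assoc, sgn_sq by auto. ring.
    + exists 0. intros s Hs; exfalso; eauto.
  - intros (d & Hd & c & Hc). exists d; split; auto.
    destruct (classic (exists s0, in_interval a b s0)) as [[s0 Hs0]|Hno].
    + exists ((f s0 / Rabs (f s0)) * c). intros s Hs.
      rewrite Hut, Hc by auto. rewrite (Hss s0 s) by auto. reflexivity.
    + exists 0. intros s Hs; exfalso; eauto.
Qed.
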